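(* A complete orthomodular lattice $\mathbb{L}$ is of finite type if and only if $a\wedge\bigvee_{k\in K}a_k=\bigvee_{k\in K}(a\wedge a_k)$ for all $a\in\mathbb{L}$ and all increasing families $(a_k)_{k\in K}$ in $\mathbb{L}$.
   Context: An orthomodular lattice is a lattice with least element $0$, greatest element $1$ and a map $a\mapsto a^\perp$ with $a\wedge a^\perp=0$, $a\vee a^\perp=1$, $(a\wedge b)^\perp=a^\perp\vee b^\perp$, $(a\vee b)^\perp=a^\perp\wedge b^\perp$, $a^{\perp\perp}=a$, such that $b\le a$ implies $b=a\wedge(a^\perp\vee b)$. An increasing family is one indexed by a directed set $K$ with $k\le l\Rightarrow a_k\le a_l$. A quasipoint in a lattice $\mathbb{L}$ with least element $0$ is a maximal (w.r.t. inclusion) subset $\mathfrak{B}\subseteq\mathbb{L}$ such that $\mathfrak{B}\neq\emptyset$, $0\notin\mathfrak{B}$, and for all $a,b\in\mathfrak{B}$ there is $c\in\mathfrak{B}$ with $c\le a\wedge b$. $\mathcal{Q}(\mathbb{L})$ denotes the set of quasipoints; for $a\in\mathbb{L}$ put $\mathcal{Q}_a(\mathbb{L})=\{\mathfrak{B}\in\mathcal{Q}(\mathbb{L}) : a\in\mathfrak{B}\}$. The Stone spectrum is $\mathcal{Q}(\mathbb{L})$ with the topology having the sets $\mathcal{Q}_a(\mathbb{L})$ as a basis. A complete lattice $\mathbb{L}$ is of finite type if $\overline{\bigcup_{k\in K}\mathcal{Q}_{a_k}(\mathbb{L})}=\mathcal{Q}_{\bigvee_{k\in K}a_k}(\mathbb{L})$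 for every increasing family $(a_k)_{k\in K}$. *)

(* Defs.v *)
Record CompleteOML := {
  car :> Type;
  le : car -> car -> Prop;
  meet : car -> car -> car;
  join : car -> car -> car;
  orth : car -> car;
  bot : car;
  top : car;
  sup : (car -> Prop) -> car;
  le_refl : forall x, le x x;
  le_trans : forall x y z, le x y -> le y z -> le x z;
  le_antisym : forall x y, le x y -> le y x -> x = y;
  meet_glb : forall x y z, le z (meet x y) <-> (le z x /\ le z y);
  join_lub : forall x y z, le (join x y) z <-> (le x z /\ le y z);
  sup_lub : forall (S : car -> Prop) z,
      le (sup S) z <-> (forall x, S x -> le x z);
  bot_least : forall x, le bot x;
  top_greatest : forall x, le x top;
  orth_meet : forall a, meet a (orth a) = bot;
  orth_join : forall a, join a (orth a) = top;
  orth_deMorgan_meet : forall a b, orth (meet a b) = join (orth a) (orth b);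
  orth_deMorgan_join : forall a b, orth (join a b) = meet (orth a) (orth b);
  orth_invol : forall a, orth (orth a) = a;
  orthomodular : forall a b, le b a -> b = meet a (join (orth a) b)
}.

Arguments le {c} _ _.
Arguments meet {c} _ _.
Arguments join {c} _ _.
Arguments orth {c} _.
Arguments bot {c}.
Arguments top {c}.
Arguments sup {c} _.

Definition directed (K : Type) (leK : K -> K -> Prop) : Prop :=
  (forall k, leK k k) /\
  (forall k l m, leK k l -> leK l m -> leK k m) /\
  inhabited K /\
  (forall k l, exists m, leK k m /\ leK l m).

Definition increasing_family {L : CompleteOML} (K : Type)
  (leK : K -> K -> Prop) (a : K -> L) : Prop :=
  directed K leK /\ (forall k l, leK k l -> le (a k) (a l)).

Definition fam_sup {L : CompleteOML} {K : Type} (a : K -> L) : L :=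
  sup (fun x => exists k, a k = x).

Definition filter_base {L : CompleteOML} (B : L -> Prop) : Prop :=
  (exists x, B x) /\ ~ B bot /\
  (forall a b, B a -> B b -> exists c, B c /\ le c (meet a b)).

Definition quasipoint {L : CompleteOML} (B : L -> Prop) : Prop :=
  filter_base B /\
  (forall C : L -> Prop, filter_base C -> (forall x, B x -> C x) ->
     forall x, C x -> B x).

Definition Qa {L : CompleteOML} (a : L) : (L -> Prop) -> Prop :=
  fun B => quasipoint B /\ B a.

Definition stone_open {L : CompleteOML} (U : (L -> Prop) -> Prop) : Prop :=
  (forall B, U B -> quasipoint B) /\
  (forall B, U B -> exists a, Qa a B /\ forall C, Qa a C -> U C).

Definition stone_closure {L : CompleteOML} (S : (L -> Prop) -> Prop)
  : (L -> Prop) -> Prop :=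
  fun B => quasipoint B /\
    forall U, stone_open U -> U B -> exists C, U C /\ S C.

Definition finite_type (L : CompleteOML) : Prop :=
  forall (K : Type) (leK : K -> K -> Prop) (a : K -> L),
    increasing_family K leK a ->
    forall B : L -> Prop,
      stone_closure (fun C => exists k, Qa (a k) C) B <-> Qa (fam_sup a) B.

(* Main.v *)
Require Import Defs.
From Stdlib Require Import Classical.
Module ZornM.
From mathcomp Require Import all_boot classical_sets boolp.
Lemma zorn_sets (T : Type) (P : (T -> Prop) -> Prop) :
 (forall F : (T->Prop)->Prop, (forall X, F X -> P X) ->
   (forall X Y, F X -> F Y -> (forall t, X t -> Y t) \/ (forall t, Y t -> X t)) ->
   P (fun t => exists X, F X /\ X t)) ->
 exists A, P A /\ forall B, (forall t, A t -> B t) -> P B -> forall t, B t -> A t.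
Proof.
Local Open Scope classical_set_scope.
move=> H.
have Hc : forall F : set (set T), F `<=` P -> total_on F subset ->
      P (\bigcup_(X in F) X).
  move=> F FP Ftot.
  have -> : (\bigcup_(X in F) X) = (fun t => exists X, F X /\ X t).
    by apply/funext => t; apply/propext; split; [case=> X FX Xt; exists X|case=> X [FX Xt]; exists X].
  apply: H => //.
have [A [PA Amax]] := @Zorn_bigcup T P Hc.
exists A; split => // B AB PB t Bt.
apply: contrapT => nAt; apply: (Amax B) => //; split => // BA.
by apply: nAt; apply: BA.
Qed.
End ZornM.

Section OML.
Variable L : CompleteOML.

Lemma meet_l (x y : L) : le (meet x y) x.
Proof. apply (proj1 (meet_glb L x y (meet x y)) (le_refl L _)). Qed.
Lemma meet_r (x y : L) : le (meet x y) y.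
Proof. apply (proj1 (meet_glb L x y (meet x y)) (le_refl L _)). Qed.
Lemma le_meet (x y z : L) : le z x -> le z y -> le z (meet x y).
Proof. intros; apply (proj2 (meet_glb L x y z)); auto. Qed.
Lemma join_l (x y : L) : le x (join x y).
Proof. apply (proj1 (join_lub L x y (join x y)) (le_refl L _)). Qed.
Lemma join_r (x y : L) : le y (join x y).
Proof. apply (proj1 (join_lub L x y (join x y)) (le_refl L _)). Qed.
Lemma le_join (x y z : L) : le x z -> le y z -> le (join x y) z.
Proof. intros; apply (proj2 (join_lub L x y z)); auto. Qed.
Lemma sup_ub (S : L -> Prop) x : S x -> le x (sup S).
Proof. intros; apply (proj1 (sup_lub L S (sup S)) (le_refl L _)); auto. Qed.
Lemma le_bot (x : L) : le x bot -> x = bot.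
Proof. intros; apply le_antisym; auto; apply bot_least. Qed.

Lemma dual_om (b c : L) : le b c -> c = join b (meet (orth b) c).
Proof.
intros H.
assert (H1 : le (orth c) (orth b)).
{ assert (E : meet b c = b) by (apply le_antisym; [apply meet_l | apply le_meet; auto; apply le_refl]).
  assert (E2 : orth (meet b c) = orth b) by (rewrite E; reflexivity).
  rewrite orth_deMorgan_meet in E2. rewrite <- E2. apply join_r. }
pose proof (orthomodular L (orth b) (orth c) H1) as E.
assert (E' : orth (orth c) = orth (meet (orth b) (join (orth (orth b)) (orth c)))) by (rewrite <- E; reflexivity).
repeat (rewrite orth_invol in E' || rewrite orth_deMorgan_meet in E' || rewrite orth_deMorgan_join in E').
exact E'.
Qed.

Lemma qp_up (B : L -> Prop) : quasipoint B -> forall y z, B y -> le y z -> B z.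
Proof.
intros [[Hne [Hb Hm]] Hmax] y z By Hyz.
apply (Hmax (fun z => exists y, B y /\ le y z)).
- unfold filter_base; split; [|split].
  + destruct Hne as [x Bx]; exists x, x; split; auto; apply le_refl.
  + intros [w [Bw Hw]]; apply Hb; rewrite <- (le_bot w Hw); auto.
  + intros a b [y1 [B1 H1]] [y2 [B2 H2]].
    destruct (Hm y1 y2 B1 B2) as [c [Bc Hc]].
    exists c; split. exists c; split; auto; apply le_refl.
    apply le_meet; eapply le_trans; try apply Hc; eapply le_trans; [|apply H1|idtac|apply H2]; [apply meet_l|apply meet_r].
- intros x Bx; exists x; split; auto; apply le_refl.
- exists y; auto.
Qed.

Lemma qp_meet (B : L -> Prop) : quasipoint B -> forall x y, B x -> B y -> B (meet x y).
Proof.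
intros HB x y Bx By. pose proof HB as [[_ [_ Hm]] _].
destruct (Hm x y Bx By) as [c [Bc Hc]]. eapply qp_up; eauto.
Qed.

Lemma qp_nbot (B : L -> Prop) : quasipoint B -> ~ B bot.
Proof. intros [[_ [H _]] _]; exact H. Qed.

Lemma qp_out (B : L -> Prop) : quasipoint B -> forall x, ~ B x -> exists b, B b /\ meet x b = bot.
Proof.
intros HB x nBx. apply NNPP; intros Hn.
assert (Hn' : forall b, B b -> meet x b <> bot) by (intros b Bb E; apply Hn; exists b; auto).
pose proof HB as [[Hne [Hb Hm]] Hmax].
apply nBx. apply (Hmax (fun y => exists b, B b /\ le (meet x b) y)).
- split; [|split].
  + destruct Hne as [b Bb]; exists (meet x b), b; split; auto; apply le_refl.
  + intros [b [Bb Hw]]; apply (Hn' b Bb); apply le_bot; auto.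
  + intros y1 y2 [b1 [B1 H1]] [b2 [B2 H2]].
    destruct (Hm b1 b2 B1 B2) as [c [Bc Hc]].
    exists (meet x c); split. exists c; split; auto; apply le_refl.
    apply le_meet.
    * eapply le_trans; [|apply H1]. apply le_meet. apply meet_l.
      eapply le_trans; [apply meet_r|]. eapply le_trans; [apply Hc|apply meet_l].
    * eapply le_trans; [|apply H2]. apply le_meet. apply meet_l.
      eapply le_trans; [apply meet_r|]. eapply le_trans; [apply Hc|apply meet_r].
- intros y By; exists y; split; auto; apply meet_r.
- destruct Hne as [b Bb]; exists b; split; auto; apply meet_l.
Qed.

Lemma qp_exists (x : L) : x <> bot -> exists B, quasipoint B /\ B x.
Proof.
intros Hx.
pose (P := fun X : L -> Prop => ~ X bot /\
   (forall a b, X a -> X b -> exists c, X c /\ le c (meet a b)) /\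
   (forall y, X y -> X x)).
destruct (ZornM.zorn_sets L P) as [A [PA Amax]].
- intros F FP Ftot. repeat split.
  + intros [X [FX Xb]]. apply (proj1 (FP X FX)); auto.
  + intros a b [X [FX Xa]] [Y [FY Yb]].
    destruct (Ftot X Y FX FY) as [XY|YX].
    * destruct (proj1 (proj2 (FP Y FY)) a b (XY a Xa) Yb) as [c [Yc Hc]].
      exists c; split; auto; exists Y; auto.
    * destruct (proj1 (proj2 (FP X FX)) a b Xa (YX b Yb)) as [c [Xc Hc]].
      exists c; split; auto; exists X; auto.
  + intros y [X [FX Xy]]. exists X; split; auto. apply (proj2 (proj2 (FP X FX)) y Xy).
- assert (Ax : A x).
  { apply NNPP; intros nAx.
    assert (Hup : P (fun y => le x y)).
    { repeat split.
      - intros H; apply Hx; apply le_bot; auto.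
      - intros a b Ha Hb; exists x; split; [apply le_refl|apply le_meet; auto].
      - intros; apply le_refl. }
    assert (Hsub : forall t, A t -> le x t).
    { intros t At; exfalso; apply nAx; apply (proj2 (proj2 PA) t At). }
    apply nAx. apply (Amax _ Hsub Hup). apply le_refl. }
  exists A; split; auto. split.
  + destruct PA as [H1 [H2 H3]]. split; [exists x; auto|split; auto].
  + intros C [_ [HC1 HC2]] AC. apply Amax; auto.
    repeat split; auto.
Qed.

End OML.

Lemma Qa_open (L : CompleteOML) (b : L) : stone_open (Qa b).
Proof.
split. intros B [H _]; exact H.
intros B HB; exists b; split; auto.
Qed.

Theorem lemma3p21 (L : CompleteOML) :
  finite_type L <->
  (forall (a : L) (K : Type) (leK : K -> K -> Prop) (ak : K -> L),
     increasing_family K leK ak ->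
     meet a (fam_sup ak) = fam_sup (fun k => meet a (ak k))).
Proof.
split.
- intros FT a K leK ak Hinc.
  set (s := fam_sup (fun k => meet a (ak k))).
  set (c := meet a (fam_sup ak)).
  assert (Hsc : le s c).
  { apply (proj2 (sup_lub L _ c)). intros x [k <-].
    apply le_meet. apply meet_l. eapply le_trans; [apply meet_r|].
    apply sup_ub; exists k; reflexivity. }
  rewrite (dual_om L s c Hsc).
  destruct (classic (meet (orth s) c = bot)) as [E|Hd].
  + rewrite E. apply le_antisym. apply le_join; [apply le_refl|apply bot_least]. apply join_l.
  + exfalso. set (d := meet (orth s) c) in *.
    destruct (qp_exists L d Hd) as [B [QB Bd]].
    assert (HQ : Qa (fam_sup ak) B).
    { split; auto. eapply qp_up; eauto. eapply le_trans; [apply meet_r|]. apply meet_r. }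
    destruct (proj2 (FT K leK ak Hinc B) HQ) as [_ Hcl].
    destruct (Hcl (Qa d) (Qa_open L d) (conj QB Bd)) as [C [[QC Cd] [k [_ Cak]]]].
    apply (qp_nbot L C QC).
    replace bot with (meet d (ak k)). apply qp_meet; auto.
    apply le_bot. rewrite <- (orth_meet L s). apply le_meet.
    * eapply le_trans with (meet a (ak k)).
      apply le_meet. eapply le_trans; [apply meet_l|]. eapply le_trans; [apply meet_r|apply meet_l].
      apply meet_r. apply sup_ub. exists k; reflexivity.
    * eapply le_trans; [apply meet_l|apply meet_l].
- intros D K leK ak Hinc B. split.
  + intros [QB Hcl]. split; auto.
    apply NNPP; intros ns.
    destruct (qp_out L B QB _ ns) as [b [Bb E]].
    destruct (Hcl (Qa b) (Qa_open L b) (conj QB Bb)) as [C [[QC Cb] [k [_ Cak]]]].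
    apply (qp_nbot L C QC).
    replace bot with (meet b (ak k)). apply qp_meet; auto.
    apply le_bot. rewrite <- E. apply le_meet. eapply le_trans; [apply meet_r|]. apply sup_ub; exists k; reflexivity.
    apply meet_l.
  + intros [QB Bs]. split; auto.
    intros U HU UB. destruct (proj2 HU B UB) as [a' [[_ Ba'] Hsub]].
    assert (He : B (meet a' (fam_sup ak))) by (apply qp_meet; auto).
    rewrite (D a' K leK ak Hinc) in He.
    assert (Hk : exists k, meet a' (ak k) <> bot).
    { apply NNPP; intros Hn. apply (qp_nbot L B QB).
      replace bot with (fam_sup (fun k => meet a' (ak k))); auto.
      apply le_bot. apply (proj2 (sup_lub L _ bot)). intros x [k <-].
      apply NNPP; intros Hk; apply Hn; exists k; intros E; apply Hk; rewrite E; apply le_refl. }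
    destruct Hk as [k Hk].
    destruct (qp_exists L _ Hk) as [C [QC Cm]].
    exists C; split.
    * apply Hsub; split; auto. eapply qp_up; eauto; apply meet_l.
    * exists k; split; auto. eapply qp_up; eauto; apply meet_r.
Qed.
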